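(* Consider the $N$-layer cascade of the context, let $1\le m<n\le N$ and $1\le l\le L_m-1$. Then the monomials \[\mathcal{M}_{n,s_{m,l}}=s_{m,l}\,f_m\,s_{m,L_m}\prod_{i=m+1}^n s_{i,L_i-1},\qquad \mathcal{M}_{n,v_{m,l}}=v_{m,l}\,s_{m,L_m}\prod_{i=m+1}^n s_{i,L_i-1}\] appear in $s_{n,L_n}^{(2(n-m+1))}$ and in no derivative $s_{n,L_n}^{(\ell)}$ with $1\le\ell<2(n-m+1)$; their coefficients in $s_{n,L_n}^{(2(n-m+1))}$ are, up to sign, \[\tilde a_{m,l}\,\tilde a_{m,L_m}\prod_{i=m+1}^n c_{i,L_i}a_{i,L_i}\qquad\text{and}\qquad \tilde K_{m,l}\,\tilde a_{m,L_m}\prod_{i=m+1}^n c_{i,L_i}a_{i,L_i},\] respectively, where $\tilde K_{m,l}=\tilde b_{m,l}+\tilde c_{m,l}$.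
   Context: Species are capital letters, concentrations lower-case letters. Mass-action system: $\dot{\mathbf{x}}=\sum_{y\to y'}k_{yy'}\mathbf{x}^y(y'-y)$. Total derivative: $\dot\varphi=\sum_i\frac{\partial\varphi}{\partial x_i}\dot x_i$ with $\dot x_i$ replaced by the right-hand side; $\varphi^{(\ell)}$ the $\ell$-th iterate, a polynomial in concentrations with coefficients polynomial in the rate constants; a monomial appears if its coefficient is nonzero. Cascade: $N\ge1$, $L_1,\dots,L_N\ge1$. Non-intermediate species $E$, pairwise distinct $F_1,\dots,F_N$, and $S_{m,j}$ ($1\le m\le N$, $0\le j\le L_m$), all distinct; intermediates $U_{m,j},V_{m,j}$ ($1\le j\le L_m$), all distinct. $S_{0,L_0}:=E$. For each $m$, $1\le j\le L_m$: $S_{m-1,L_{m-1}}+S_{m,j-1}\to U_{m,j}$ (rate $a_{m,j}$), $U_{m,j}\to S_{m-1,L_{m-1}}+S_{m,j-1}$ ($b_{m,j}$), $U_{m,j}\to S_{m-1,L_{m-1}}+S_{m,j}$ ($c_{m,j}$), $F_m+S_{m,j}\to V_{m,j}$ ($\tilde a_{m,j}$), $V_{m,j}\to F_m+S_{m,j}$ ($\tilde b_{m,j}$), $V_{m,j}\to F_m+S_{m,j-1}$ ($\tilde c_{m,j}$). *)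

(* Defs.v *)
(* Formal polynomials in concentrations AND rate constants,
   with integer coefficients, represented as lists of terms. *)
From HB Require Import structures.
From mathcomp Require Import all_boot all_order all_algebra.
Set Implicit Arguments. Unset Strict Implicit. Unset Printing Implicit Defensive.
Import Order.TTheory GRing.Theory Num.Theory.
Local Open Scope ring_scope.

(* Formal variables: (kind, m, j).  Kinds:
   0 = E, 1 = F_m, 2 = S_{m,j}, 3 = U_{m,j}, 4 = V_{m,j}   (concentrations)
   5 = a_{m,j}, 6 = b_{m,j}, 7 = c_{m,j},
   8 = ~a_{m,j}, 9 = ~b_{m,j}, 10 = ~c_{m,j}                (rate constants) *)
Definition var := (nat * nat * nat)%type.

Definition spE : var := (0, 0, 0)%N.
Definition spF (m : nat) : var := (1, m, 0)%N.
Definition spS (m j : nat) : var := (2, m, j)%N.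
Definition spU (m j : nat) : var := (3, m, j)%N.
Definition spV (m j : nat) : var := (4, m, j)%N.
Definition ka (m j : nat) : var := (5, m, j)%N.
Definition kb (m j : nat) : var := (6, m, j)%N.
Definition kc (m j : nat) : var := (7, m, j)%N.
Definition kat (m j : nat) : var := (8, m, j)%N.
Definition kbt (m j : nat) : var := (9, m, j)%N.
Definition kct (m j : nat) : var := (10, m, j)%N.

Definition is_rate (x : var) : bool := (5 <= x.1.1)%N.

(* A polynomial: list of terms (c, vs) meaning c * prod_{v in vs} v. *)
Definition poly := seq (int * seq var).

Definition coef (p : poly) (mon : seq var) : int :=
  \sum_(t <- p | perm_eq t.2 mon) t.1.

Record reaction := Reaction { rrate : var; rreac : seq var; rprod : seq var }.

Definition catalyst (L : nat -> nat) (m : nat) : var :=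
  if m == 1%N then spE else spS m.-1 (L m.-1).

Definition reactions_mj (L : nat -> nat) (m j : nat) : seq reaction :=
  let K := catalyst L m in
  [:: Reaction (ka m j) [:: K; spS m j.-1] [:: spU m j];
      Reaction (kb m j) [:: spU m j] [:: K; spS m j.-1];
      Reaction (kc m j) [:: spU m j] [:: K; spS m j];
      Reaction (kat m j) [:: spF m; spS m j] [:: spV m j];
      Reaction (kbt m j) [:: spV m j] [:: spF m; spS m j];
      Reaction (kct m j) [:: spV m j] [:: spF m; spS m j.-1]].

Definition reactions (N : nat) (L : nat -> nat) : seq reaction :=
  flatten [seq flatten [seq reactions_mj L m j | j <- iota 1 (L m)]
          | m <- iota 1 N].

(* Mass-action right-hand side of d x / dt:  sum_r k_r x^{y_r} (y'_r - y_r)_x *)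
Definition rhs (N : nat) (L : nat -> nat) (x : var) : poly :=
  [seq (((count_mem x (rprod r))%:Z - (count_mem x (rreac r))%:Z),
        rrate r :: rreac r) | r <- reactions N L].

(* product rule: d/dt (prod pre * prod vs) contributions from the factors vs *)
Fixpoint dmon (f : var -> poly) (pre vs : seq var) : poly :=
  match vs with
  | [::] => [::]
  | v :: vs' => [seq (t.1, pre ++ vs' ++ t.2) | t <- f v] ++ dmon f (rcons pre v) vs'
  end.

(* total derivative (rate constants have zero derivative: rhs of a rate
   variable is a list of zero-coefficient terms) *)
Definition tderiv (N : nat) (L : nat -> nat) (p : poly) : poly :=
  flatten [seq [seq (t.1 * u.1, u.2) | u <- dmon (rhs N L) [::] t.2] | t <- p].

Definition nderiv (N : nat) (L : nat -> nat) (l : nat) (x : var) : poly :=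
  iter l (tderiv N L) [:: (1, [:: x])].

(* The coefficient of concentration-monomial M in p (a polynomial in the
   rate constants) is zero. *)
Definition conc_coef_zero (p : poly) (M : seq var) : Prop :=
  forall R : seq var, all is_rate R -> coef p (M ++ R) = 0.

(* The coefficient of concentration-monomial M in p equals the polynomial
   in rate constants C (given as a list of rate monomials, each coefficient 1). *)
Definition conc_coef_eq (p : poly) (M : seq var) (sgn : int) (C : seq (seq var)) : Prop :=
  forall R : seq var, all is_rate R ->
    coef p (M ++ R) = sgn * (\sum_(c <- C) (perm_eq c R)%:R).

(* Main.v *)
Require Import Defs.
From HB Require Import structures.
From mathcomp Require Import all_boot all_order all_algebra.
From mathcomp Require Import zify ring.
Import Order.TTheory GRing.Theory Num.Theory.
Local Open Scope ring_scope.
Set Implicit Arguments. Unset Strict Implicit. Unset Printing Implicit Defensive.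


Definition net (v : var) (r : reaction) : int :=
  (count_mem v (rprod r))%:Z - (count_mem v (rreac r))%:Z.
Definition Dop N L (g : seq var -> int) (vs : seq var) : int :=
  \sum_(v <- vs) \sum_(r <- reactions N L) net v r * g (rem v vs ++ rrate r :: rreac r).
Definition Sp (p : Defs.poly) (g : seq var -> int) : int := \sum_(t <- p) t.1 * g t.2.
Definition pinv (g : seq var -> int) := forall a b, perm_eq a b -> g a = g b.

Lemma perm_rem_eq (v : var) a b : perm_eq a b -> perm_eq (rem v a) (rem v b).
Proof.
move=> pab; apply/permP => P; rewrite !count_rem (perm_mem pab).
by rewrite (permP pab P).
Qed.

Lemma dmonE (f : var -> Defs.poly) g pre vs : pinv g ->
  \sum_(u <- dmon f pre vs) u.1 * g u.2 =
  \sum_(v <- vs) \sum_(s <- f v) s.1 * g (pre ++ rem v vs ++ s.2).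
Proof.
move=> Hg; elim: vs pre => [|v vs IH] pre /=; first by rewrite !big_nil.
rewrite big_cat big_map big_cons IH /= eqxx; congr (_ + _).
rewrite big_seq_cond [RHS]big_seq_cond; apply: eq_bigr => v' /andP[Hv' _].
apply: eq_bigr => s _; congr (_ * _); apply: Hg.
case: (eqVneq v v') => [Hvv|nv].
  subst v'; rewrite -cats1 -!catA perm_cat2l.
  rewrite (catA [:: v]) perm_cat2r perm_sym; exact: perm_to_rem.
rewrite -cats1 -!catA perm_cat2l /=.
by rewrite perm_refl.
Qed.

Lemma SpD N L p g : pinv g -> Sp (tderiv N L p) g = Sp p (Dop N L g).
Proof.
move=> Hg; rewrite /Sp /tderiv big_flatten big_map /=; apply: eq_bigr => t _.
rewrite big_map /Dop.
have := dmonE (rhs N L) [::] t.2 Hg; rewrite /= => E.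
transitivity (t.1 * \sum_(u <- dmon (rhs N L) [::] t.2) u.1 * g u.2).
  rewrite big_distrr /=; apply: eq_bigr => u _; by rewrite mulrA.
rewrite E; congr (_ * _); apply: eq_bigr => v _; by rewrite big_map.
Qed.

Lemma SpD' N L p g : pinv g -> Sp (tderiv N L p) g = Sp p (Dop N L g).
Proof. exact: SpD. Qed.

Lemma DopE N L g vs : Dop N L g vs = \sum_(v <- vs) \sum_(s <- rhs N L v) s.1 * g (rem v vs ++ s.2).
Proof. by apply: eq_bigr => v _; rewrite big_map. Qed.

Lemma pinvD N L g : pinv g -> pinv (Dop N L g).
Proof.
move=> Hg a b pab; rewrite /Dop (perm_big _ pab) /=; apply: eq_bigr => v _.
apply: eq_bigr => r _; congr (_ * _); apply: Hg; rewrite perm_cat2r.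
by apply: perm_rem_eq.
Qed.

Lemma pinv_iter N L k g : pinv g -> pinv (iter k (Dop N L) g).
Proof. by move=> Hg; elim: k => //= k IH; apply: pinvD. Qed.

Lemma Sp_iter N L k p g : pinv g -> Sp (iter k (tderiv N L) p) g = Sp p (iter k (Dop N L) g).
Proof.
move=> Hg; elim: k g Hg => //= k IH g Hg.
rewrite SpD // IH; last exact: pinvD.
by rewrite -iterSr.
Qed.

Lemma coef_Sp p M : coef p M = Sp p (fun x => (perm_eq x M)%:R).
Proof.
rewrite /coef /Sp big_mkcond /=; apply: eq_bigr => t _.
by case: (perm_eq t.2 M); rewrite ?mulr1 ?mulr0.
Qed.

Lemma pinv_delta M : pinv (fun x => (perm_eq x M)%:R).
Proof. by move=> a b pab /=; rewrite ((permPl pab) M). Qed.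

Lemma coef_nderiv N L k x M :
  coef (nderiv N L k x) M = iter k (Dop N L) (fun y => (perm_eq y M)%:R) [:: x].
Proof.
rewrite coef_Sp /nderiv Sp_iter; last exact: pinv_delta.
by rewrite /Sp big_cons big_nil /= mul1r addr0.
Qed.

Definition reac_tuple (r : reaction) := (rrate r, rreac r, rprod r).
Definition tuple_reac (x : var * seq var * seq var) := Reaction x.1.1 x.1.2 x.2.
Lemma reac_tupleK : cancel reac_tuple tuple_reac. Proof. by case. Qed.
HB.instance Definition _ := Equality.copy reaction (can_type reac_tupleK).

Lemma mem_In (T : eqType) (x : T) s : x \in s -> List.In x s.
Proof. elim: s => //= y s IH; rewrite inE => /orP[/eqP ->|/IH]; auto. Qed.

Lemma reactions_mem N L r : r \in reactions N L ->
  exists i j, (1 <= i <= N)%N /\ (1 <= j <= L i)%N /\ List.In r (reactions_mj L i j).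
Proof.
case/flatten_mapP => i; rewrite mem_iota => Hi /flatten_mapP [j]; rewrite mem_iota => Hj /mem_In Hr.
exists i, j; split; first lia. split; first lia. exact: Hr.
Qed.

Lemma sumn_map_bool (T : Type) (P : pred T) s : sumn (map (fun x => nat_of_bool (P x)) s) = count P s.
Proof. by elim: s => //= x s ->. Qed.

Lemma count_rate N L k0 : (5 <= k0.1.1 <= 10)%N -> (1 <= k0.1.2 <= N)%N -> (1 <= k0.2 <= L k0.1.2)%N ->
  count (fun r => rrate r == k0) (reactions N L) = 1%N.
Proof.
case: k0 => [[t i0] j0] /= Ht Hi0 Hj0.
have E2 : forall i j, count (fun r => rrate r == (t, i0, j0)) (reactions_mj L i j) = ((i == i0) && (j == j0))%N.
  move=> i j; rewrite /reactions_mj /= /ka /kb /kc /kat /kbt /kct !xpair_eqE.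
  case: (i == i0); case: (j == j0); rewrite /= ?andbF ?andbT //=;
  case: t Ht => [|[|[|[|[|[|[|[|[|[|[|t]]]]]]]]]]] //.
have E : forall i, count (fun r => rrate r == (t, i0, j0)) (flatten [seq reactions_mj L i j | j <- iota 1 (L i)])
   = ((i == i0) && (j0 \in iota 1 (L i)))%N.
  move=> i; rewrite count_flatten -map_comp.
  rewrite (eq_map (g := fun j => nat_of_bool ((i == i0) && (j == j0)))); last by move=> j; exact: E2.
  rewrite sumn_map_bool; case: (i == i0) => /=; last by rewrite count_pred0.
  exact: (count_uniq_mem _ (iota_uniq _ _)).
rewrite /reactions count_flatten -map_comp.
rewrite (eq_map (g := fun i => nat_of_bool ((i == i0) && (j0 \in iota 1 (L i0))))); last first.
  move=> i /=; rewrite E; case: (eqVneq i i0) => [Heq|Hne]; [by subst | by []].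
rewrite sumn_map_bool mem_iota (_ : (1 <= j0 < 1 + L i0)%N = true); last by lia.
rewrite (eq_count (a2 := pred1 i0)); last by move=> x; rewrite /= andbT.
by rewrite (count_uniq_mem _ (iota_uniq _ _)) mem_iota (_ : (1 <= i0 < 1 + N)%N = true) //; lia.
Qed.


Definition Jw (L : nat -> nat) (m n l : nat) : int := (2 * n)%:Z + (L m)%:Z + l%:Z + 5.

Definition wv (L : nat -> nat) (m n l : nat) (x : var) : int :=
  let: (k, i, j) := x in
  if k == 0%N then - Jw L m n l
  else if k == 1%N then (if i == m then 1 else - Jw L m n l)
  else if k == 2%N then
    (if (m < i <= n)%N && (j == L i) then - (2 * (i%:Z - m%:Z))
     else if (m < i <= n)%N && (j.+1 == L i) then 0
     else if i == m then
       (if (j < l)%N then j%:Z - l%:Z + 2 else if j == l then 1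
        else if (j <= L i)%N then j%:Z - (L i)%:Z else - Jw L m n l)
     else - Jw L m n l)
  else if k == 3%N then
    (if (m < i <= n)%N && (j == L i) then 1 - 2 * (i%:Z - m%:Z) else - Jw L m n l)
  else if k == 4%N then
    (if i == m then
       (if (j < l)%N then j%:Z - l%:Z + 2 else if j == l then 2
        else if (j <= L i)%N then j%:Z - (L i)%:Z else - Jw L m n l)
     else - Jw L m n l)
  else 0.

Definition Wt L m n l (vs : seq var) : int := \sum_(v <- vs) wv L m n l v.

Lemma net_mem v r : net v r != 0 -> v \in rreac r ++ rprod r.
Proof.
apply: contraR; rewrite mem_cat negb_or => /andP[h1 h2].
by rewrite /net !(count_memPn _) ?subrr.
Qed.

Ltac hyps := repeat match goal with
 | H : is_true (_ && _) |- _ => case/andP: H => ? ?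
 | H : (_ && _) = true |- _ => case/andP: H => ? ?
 | H : is_true (?a == ?b) |- _ => move/eqP: H => H; try subst a; try subst b
 | H : (?a == ?b) = true |- _ => move/eqP: H => H; try subst a; try subst b
 end.

Ltac wsplit := repeat (match goal with |- context [if ?b then _ else _] => let E := fresh "E" in case E: b end; hyps).

Lemma feas L m n l i j v r (Hm : (1 <= m)%N) (Hmn : (m < n)%N) (Hl1 : (1 <= l)%N)
  (Hl2 : (l <= L m - 1)%N) (Hi : (1 <= i)%N) (Hj : (1 <= j <= L i)%N) :
  List.In r (reactions_mj L i j) -> net v r != 0 ->
  Wt L m n l (rreac r) <= wv L m n l v + 1.
Proof.
rewrite /reactions_mj /= => Hr /net_mem; rewrite /Wt.
case: Hr => [<-|[<-|[<-|[<-|[<-|[<-|[]]]]]]]; rewrite /catalyst /=; try (case: ifP => Hi1);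
  rewrite !inE; case/or3P=> /eqP ->; rewrite !big_cons big_nil;
  rewrite /wv /Jw /=; wsplit; try lia.
Qed.

Lemma tightS L m n l i0 i j v r (Hm : (1 <= m)%N) (Hmn : (m < n)%N) (Hl1 : (1 <= l)%N)
  (Hl2 : (l <= L m - 1)%N) (Hi : (1 <= i)%N) (Hj : (1 <= j <= L i)%N) (Hi0 : (m < i0 <= n)%N) :
  v = spS i0 (L i0) -> List.In r (reactions_mj L i j) -> net v r != 0 ->
  Wt L m n l (rreac r) = wv L m n l v + 1 -> rrate r = kc i0 (L i0).
Proof.
  rewrite /reactions_mj /= => Hv Hr /net_mem Hin; rewrite /Wt; move: Hin.
  case: Hr => [<-|[<-|[<-|[<-|[<-|[<-|[]]]]]]]; rewrite /catalyst /=; try (case: ifP => Hi1);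
  rewrite !inE; case/or3P=> /eqP Ev; rewrite Ev in Hv; case: Hv; move=> *; subst; hyps;
  match goal with H : (_ = wv _ _ _ _ _ + 1) |- _ => move: H end;
  rewrite ?big_cons ?big_nil /wv /Jw /=; wsplit; try (move=> ?; exfalso; lia); try done.
Qed.

Lemma tightSm L m n l i j v r (Hm : (1 <= m)%N) (Hmn : (m < n)%N) (Hl1 : (1 <= l)%N)
  (Hl2 : (l <= L m - 1)%N) (Hi : (1 <= i)%N) (Hj : (1 <= j <= L i)%N)  :
  v = spS m (L m) -> List.In r (reactions_mj L i j) -> net v r != 0 ->
  Wt L m n l (rreac r) = wv L m n l v + 1 -> rrate r = kat m (L m).
Proof.
  rewrite /reactions_mj /= => Hv Hr /net_mem Hin; rewrite /Wt; move: Hin.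
  case: Hr => [<-|[<-|[<-|[<-|[<-|[<-|[]]]]]]]; rewrite /catalyst /=; try (case: ifP => Hi1);
  rewrite !inE; case/or3P=> /eqP Ev; rewrite Ev in Hv; case: Hv; move=> *; subst; hyps;
  match goal with H : (_ = wv _ _ _ _ _ + 1) |- _ => move: H end;
  rewrite ?big_cons ?big_nil /wv /Jw /=; wsplit; try (move=> ?; exfalso; lia); try done.
Qed.

Lemma tightU L m n l i0 i j v r (Hm : (1 <= m)%N) (Hmn : (m < n)%N) (Hl1 : (1 <= l)%N)
  (Hl2 : (l <= L m - 1)%N) (Hi : (1 <= i)%N) (Hj : (1 <= j <= L i)%N) (Hi0 : (m < i0 <= n)%N) :
  v = spU i0 (L i0) -> List.In r (reactions_mj L i j) -> net v r != 0 ->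
  Wt L m n l (rreac r) = wv L m n l v + 1 -> rrate r = ka i0 (L i0).
Proof.
  rewrite /reactions_mj /= => Hv Hr /net_mem Hin; rewrite /Wt; move: Hin.
  case: Hr => [<-|[<-|[<-|[<-|[<-|[<-|[]]]]]]]; rewrite /catalyst /=; try (case: ifP => Hi1);
  rewrite !inE; case/or3P=> /eqP Ev; rewrite Ev in Hv; case: Hv; move=> *; subst; hyps;
  match goal with H : (_ = wv _ _ _ _ _ + 1) |- _ => move: H end;
  rewrite ?big_cons ?big_nil /wv /Jw /=; wsplit; try (move=> ?; exfalso; lia); try done.
Qed.

Lemma tightA L m n l i0 i j v r (Hm : (1 <= m)%N) (Hmn : (m < n)%N) (Hl1 : (1 <= l)%N)
  (Hl2 : (l <= L m - 1)%N) (Hi : (1 <= i)%N) (Hj : (1 <= j <= L i)%N) (Hi0 : (m < i0 <= n)%N) (HL0 : (1 <= L i0)%N) :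
  v = spS i0 (L i0 - 1) -> List.In r (reactions_mj L i j) -> net v r != 0 ->
  Wt L m n l (rreac r) = wv L m n l v + 1 -> False.
Proof.
  rewrite /reactions_mj /= => Hv Hr /net_mem Hin; rewrite /Wt; move: Hin.
  case: Hr => [<-|[<-|[<-|[<-|[<-|[<-|[]]]]]]]; rewrite /catalyst /=; try (case: ifP => Hi1);
  rewrite !inE; case/or3P=> /eqP Ev; rewrite Ev in Hv; case: Hv; move=> *; subst; hyps;
  match goal with H : (_ = wv _ _ _ _ _ + 1) |- _ => move: H end;
  rewrite ?big_cons ?big_nil /wv /Jw /=; wsplit; try (move=> ?; exfalso; lia); try done.
Qed.


Lemma wv_rate L m n l (x : var) : (5 <= x.1.1)%N -> wv L m n l x = 0.
Proof.
case: x => [[k i] j] /= Hk; rewrite /wv.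
by repeat (case: ifP => [/eqP ?|_]; first by lia).
Qed.

Lemma Wt_cat L m n l a b : Wt L m n l (a ++ b) = Wt L m n l a + Wt L m n l b.
Proof. by rewrite /Wt big_cat. Qed.
Lemma Wt_cons L m n l x a : Wt L m n l (x :: a) = wv L m n l x + Wt L m n l a.
Proof. by rewrite /Wt big_cons. Qed.
Lemma Wt_nil L m n l : Wt L m n l [::] = 0.
Proof. by rewrite /Wt big_nil. Qed.
Lemma Wt_perm L m n l a b : perm_eq a b -> Wt L m n l a = Wt L m n l b.
Proof. by move=> pab; rewrite /Wt (perm_big _ pab). Qed.
Lemma Wt_rates L m n l Rs : all is_rate Rs -> Wt L m n l Rs = 0.
Proof.
move/allP=> H; rewrite /Wt big1_seq // => x /andP[_ Hx]; apply: wv_rate.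
by have := H x Hx.
Qed.
Lemma Wt_rem L m n l v vs : v \in vs -> Wt L m n l (rem v vs) = Wt L m n l vs - wv L m n l v.
Proof.
move=> Hv; rewrite (Wt_perm _ _ _ _ (perm_to_rem Hv)) Wt_cons; ring.
Qed.

Lemma rate_in L i j r : List.In r (reactions_mj L i j) ->
  [/\ (5 <= (rrate r).1.1 <= 10)%N, (rrate r).1.2 = i & (rrate r).2 = j].
Proof. by rewrite /reactions_mj /=; case=> [<-|[<-|[<-|[<-|[<-|[<-|[]]]]]]]. Qed.

Lemma net_rate L i j v r : (5 <= v.1.1)%N -> List.In r (reactions_mj L i j) -> net v r = 0.
Proof.
move=> Hv.
have ne : forall x : var, (x.1.1 <= 4)%N -> (x == v) = false.
  by move=> x Hx; apply/eqP => E; subst; lia.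
rewrite /reactions_mj /catalyst /=; case: ifP => _;
case=> [<-|[<-|[<-|[<-|[<-|[<-|[]]]]]]]; by rewrite /net /= !ne.
Qed.

Lemma rate_inj L i j i' j' r r' : List.In r (reactions_mj L i j) ->
  List.In r' (reactions_mj L i' j') -> rrate r = rrate r' -> r = r'.
Proof.
rewrite /reactions_mj /=.
by case=> [<-|[<-|[<-|[<-|[<-|[<-|[]]]]]]]; case=> [<-|[<-|[<-|[<-|[<-|[<-|[]]]]]]];
  move=> /= [] *; subst.
Qed.

Lemma sum_rate1 N L (F : reaction -> int) r0 i0 j0 : (1 <= i0 <= N)%N -> (1 <= j0 <= L i0)%N ->
  List.In r0 (reactions_mj L i0 j0) ->
  \sum_(r <- reactions N L | rrate r == rrate r0) F r = F r0.
Proof.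
move=> Hi0 Hj0 Hr0.
transitivity (\sum_(r <- reactions N L | rrate r == rrate r0) F r0).
  rewrite big_seq_cond [RHS]big_seq_cond; apply: eq_bigr => r /andP[Hr /eqP Er].
  have [i [j [Hi [Hj Hr']]]] := reactions_mem Hr.
  by rewrite (rate_inj Hr' Hr0 Er).
have [Ht Hi Hj] := rate_in Hr0.
rewrite big_const_seq count_rate //; last by rewrite Hi Hj.
  by rewrite /= addr0.
by rewrite Hi.
Qed.

Lemma GS N L (g : seq var -> int) vs act (K0 : seq var) :
  count_mem act vs = 1%N ->
  (forall v, v \in vs -> forall r, r \in reactions N L -> net v r != 0 ->
     ~~ ((v == act) && (rrate r \in K0)) -> g (rem v vs ++ rrate r :: rreac r) = 0) ->
  Dop N L g vs = \sum_(r <- reactions N L | rrate r \in K0) net act r * g (rem act vs ++ rrate r :: rreac r).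
Proof.
move=> Hc Hh; rewrite /Dop.
set X := (X in _ = X).
transitivity (\sum_(v <- vs) (if v == act then X else 0)).
  apply: eq_big_seq => v Hv.
  rewrite (bigID (fun r => rrate r \in K0)) /=.
  rewrite [X in _ + X]big1_seq ?addr0; last first.
    move=> r /andP[HK Hr]; case: (eqVneq (net v r) 0) => [->|Hn]; first by rewrite mul0r.
    by rewrite Hh ?mulr0 // (negbTE HK) andbF.
  case: (eqVneq v act) => [->|Hva] //.
  apply: big1_seq => r /andP[HK Hr]; case: (eqVneq (net v r) 0) => [->|Hn]; first by rewrite mul0r.
  by rewrite Hh ?mulr0 // (negbTE Hva).
rewrite -big_mkcond big_const_seq /=.
have -> : count (fun v => v == act) vs = 1%N by rewrite -Hc.
by rewrite /= addr0.
Qed.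

Lemma CS N L m n l g vs act r0 i0 j0 (Hm : (1 <= m)%N) (Hmn : (m < n)%N) (Hl1 : (1 <= l)%N)
  (Hl2 : (l <= L m - 1)%N) (Hi0 : (1 <= i0 <= N)%N) (Hj0 : (1 <= j0 <= L i0)%N)
  (Hr0 : List.In r0 (reactions_mj L i0 j0)) :
  count_mem act vs = 1%N ->
  (forall y, Wt L m n l y <= Wt L m n l vs -> g y = 0) ->
  (forall v, v \in vs -> forall i j r, (1 <= i <= N)%N -> (1 <= j <= L i)%N ->
     List.In r (reactions_mj L i j) -> net v r != 0 ->
     Wt L m n l (rreac r) = wv L m n l v + 1 -> v = act /\ rrate r = rrate r0) ->
  Dop N L g vs = net act r0 * g (rem act vs ++ rrate r0 :: rreac r0).
Proof.
move=> Hc Hs Ht; rewrite (GS (act := act) (K0 := [:: rrate r0])) //.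
  rewrite (eq_bigl (fun r => rrate r == rrate r0)); last by move=> r; rewrite inE.
  exact: (sum_rate1 _ Hi0 Hj0 Hr0).
move=> v Hv r Hr Hn Hnot; have [i [j [Hi [Hj Hr']]]] := reactions_mem Hr.
have Hi1 : (1 <= i)%N by lia.
have Hf := feas Hm Hmn Hl1 Hl2 Hi1 Hj Hr' Hn.
have [Hk _ _] := rate_in Hr'.
have Hw0 : wv L m n l (rrate r) = 0 by apply: wv_rate; lia.
apply: Hs; rewrite Wt_cat Wt_cons Wt_rem // Hw0.
case: (eqVneq (Wt L m n l (rreac r)) (wv L m n l v + 1)) => [E|NE].
  have [Ev E2] := Ht v Hv i j r Hi Hj Hr' Hn E.
  by move: Hnot; rewrite Ev E2 eqxx inE eqxx.
lia.
Qed.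

Definition tailS (L : nat -> nat) (a n : nat) := [seq spS i (L i - 1) | i <- iota a.+1 (n - a)].

Lemma wv_alpha L m n l i : (m < i <= n)%N -> (1 <= L i)%N -> wv L m n l (spS i (L i - 1)) = 0.
Proof.
move=> Hi HL; rewrite /wv /=.
rewrite (_ : ((m < i <= n) && (L i - 1 == L i))%N = false); last by lia.
by rewrite (_ : ((m < i <= n) && ((L i - 1).+1 == L i))%N = true); last by lia.
Qed.

Lemma mem_tail L a n v : v \in tailS L a n -> exists i, (a < i <= n)%N /\ v = spS i (L i - 1).
Proof.
case/mapP => i; rewrite mem_iota => Hi ->; exists i; split => //; lia.
Qed.

Lemma Wt_tail N L m n l a (hL : forall i, (1 <= i <= N)%N -> (1 <= L i)%N) (hnN : (n <= N)%N) (Ha : (m <= a)%N) :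
  Wt L m n l (tailS L a n) = 0.
Proof.
rewrite /Wt big1_seq // => v /andP[_ /mem_tail [i [Hi ->]]].
apply: wv_alpha; first lia.
apply: hL; lia.
Qed.

Lemma count_tail L a n (x : var) : (x.1.1 != 2%N) || (x.1.2 <= a)%N -> count_mem x (tailS L a n) = 0%N.
Proof.
move=> Hx; apply/count_memPn/negP => /mem_tail [i [Hi E]]; subst x; move: Hx => /=; lia.
Qed.

Lemma count_rates (x : var) Rs : all is_rate Rs -> (x.1.1 <= 4)%N -> count_mem x Rs = 0%N.
Proof.
move=> /allP HR Hx; apply/count_memPn/negP => Hin.
have := HR x Hin; rewrite /is_rate; lia.
Qed.

Lemma wv_F L m n l : wv L m n l (spF m) = 1.
Proof. by rewrite /wv /= eqxx. Qed.

Lemma wv_Sm L m n l : (l <= L m - 1)%N -> (1 <= l)%N -> wv L m n l (spS m (L m)) = 0.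
Proof.
move=> H1 H2; rewrite /wv /= ltnn /= eqxx.
rewrite (_ : (L m < l)%N = false); last by lia.
rewrite (_ : (L m == l) = false); last by lia.
by rewrite leqnn subrr.
Qed.

Lemma in_at L m : List.In (Reaction (kat m (L m)) [:: spF m; spS m (L m)] [:: spV m (L m)])
  (reactions_mj L m (L m)).
Proof. by rewrite /reactions_mj /=; do 3 right; left. Qed.

Lemma FS N L m n l (T : seq var) (X : var) (K0 : seq var) (Rs : seq var) (Hm : (1 <= m)%N) (Hmn : (m < n)%N) (Hl1 : (1 <= l)%N)
  (Hl2 : (l <= L m - 1)%N) (hL : forall i, (1 <= i <= N)%N -> (1 <= L i)%N) (hnN : (n <= N)%N) :
  all is_rate Rs -> (X.1.1 <= 4)%N -> Wt L m n l T = 2 -> count_mem X T = 1%N ->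
  count_mem X (spF m :: spS m (L m) :: tailS L m n ++ Rs) = 0%N ->
  X \notin [:: spF m; spS m (L m)] ->
  (forall i j r, (1 <= i <= N)%N -> (1 <= j <= L i)%N -> List.In r (reactions_mj L i j) ->
     net (spF m) r != 0 -> rrate r \notin K0 -> X \notin rreac r) ->
  Dop N L (fun y => (perm_eq y T)%:R) (spF m :: spS m (L m) :: tailS L m n ++ Rs) =
  \sum_(r <- reactions N L | rrate r \in K0) net (spF m) r *
     (perm_eq (rem (spF m) (spF m :: spS m (L m) :: tailS L m n ++ Rs) ++ rrate r :: rreac r) T)%:R.
Proof.
set vs := spF m :: _.
move=> HR HX HWT HcT HcV HX2 HXr.
apply: GS.
  rewrite /vs /= eqxx count_cat count_tail ?count_rates //=.
move=> v Hv r Hr Hn Hnot.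
case: (boolP (perm_eq _ T)) => Hp //.
exfalso.
have [i [j [Hi [Hj Hr']]]] := reactions_mem Hr.
have Hi1 : (1 <= i)%N by lia.
have Hf := feas Hm Hmn Hl1 Hl2 Hi1 Hj Hr' Hn.
have [Hk _ _] := rate_in Hr'.
have Hw0 : wv L m n l (rrate r) = 0 by apply: wv_rate; lia.
have WV : Wt L m n l vs = 1.
  by rewrite /vs !Wt_cons Wt_cat (@Wt_tail N L m n l m hL hnN (leqnn m)) Wt_rates // wv_F wv_Sm // addr0 add0r addr0.
have Wres := Wt_perm L m n l Hp.
rewrite HWT Wt_cat Wt_cons Wt_rem // Hw0 WV in Wres.
have Htight : Wt L m n l (rreac r) = wv L m n l v + 1 by lia.
have Cres := permP Hp (pred1 X).
rewrite HcT count_cat /= in Cres.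
have HrX : (rrate r == X) = false by apply/eqP => E; rewrite -E in HX; lia.
have Hrem : count (pred1 X) (rem v vs) = 0%N.
  by have := count_mem_rem v X vs; rewrite HcV => ->.
rewrite Hrem /= HrX add0n in Cres.
have Hcr : forall s, X \notin s -> count (pred1 X) s = 0%N by move=> s; move/count_memPn.
move: Hv; rewrite /vs !inE mem_cat => /or4P [/eqP Ev|/eqP Ev|Hv|Hv].
- subst v; move: Hnot; rewrite eqxx /= => HK.
  by rewrite Hcr in Cres; last exact: HXr Hi Hj Hr' Hn HK.
- have E := tightSm Hm Hmn Hl1 Hl2 Hi1 Hj Ev Hr' Hn Htight.
  have := rate_inj Hr' (in_at L m) E => Er; subst r.
  have E1 : (spF m == X) = false by apply/negbTE; move: HX2; rewrite !inE negb_or eq_sym => /andP[].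
  have E2 : (spS m (L m) == X) = false.
    by apply/negbTE; move: HX2; rewrite !inE negb_or => /andP[_]; rewrite eq_sym.
  by rewrite /= E1 E2 in Cres.
- have [i0 [Hi0 Ev]] := mem_tail Hv.
  apply: (tightA (i0 := i0) Hm Hmn Hl1 Hl2 Hi1 Hj _ _ Ev Hr' Hn Htight); first lia.
  apply: hL; lia.
- have := HR; move/allP => HR'; have := HR' v Hv; rewrite /is_rate => Hv5.
  by rewrite (net_rate Hv5 Hr') eqxx in Hn.
Qed.


Lemma supportD N L m n l (Hm : (1 <= m)%N) (Hmn : (m < n)%N) (Hl1 : (1 <= l)%N)
  (Hl2 : (l <= L m - 1)%N) (g : seq var -> int) (c : int) :
  (forall y, Wt L m n l y < c -> g y = 0) ->
  forall y, Wt L m n l y < c - 1 -> Dop N L g y = 0.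
Proof.
move=> Hg y Hy; rewrite /Dop big1_seq // => v /andP[_ Hv].
rewrite big1_seq // => r /andP[_ Hr].
have [i [j [Hi [Hj Hr']]]] := reactions_mem Hr.
case: (eqVneq (net v r) 0) => [->|Hn]; first by rewrite mul0r.
have Hi1 : (1 <= i)%N by lia.
have Hf := feas Hm Hmn Hl1 Hl2 Hi1 Hj Hr' Hn.
have [Hk _ _] := rate_in Hr'.
have Hw0 : wv L m n l (rrate r) = 0 by apply: wv_rate; lia.
rewrite Hg ?mulr0 // Wt_cat Wt_cons Wt_rem // Hw0; lia.
Qed.

Lemma support_iter N L m n l (Hm : (1 <= m)%N) (Hmn : (m < n)%N) (Hl1 : (1 <= l)%N)
  (Hl2 : (l <= L m - 1)%N) (g : seq var -> int) (c : int) :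
  (forall y, Wt L m n l y < c -> g y = 0) ->
  forall t y, Wt L m n l y < c - t%:Z -> iter t (Dop N L) g y = 0.
Proof.
move=> Hg; elim=> [|t IH] y Hy /=; first by apply: Hg; lia.
apply: (@supportD N L m n l Hm Hmn Hl1 Hl2 _ (c - t%:Z)) => //; lia.
Qed.

Lemma support_delta L m n l (T : seq var) :
  forall y, Wt L m n l y < Wt L m n l T -> (fun y => (perm_eq y T)%:R : int) y = 0.
Proof.
move=> y Hy /=; case: (boolP (perm_eq y T)) => // Hp.
by move: Hy; rewrite (Wt_perm _ _ _ _ Hp) ltxx.
Qed.

Lemma perm_test (a b c d : var) (s t : seq var) : perm_eq (a :: s ++ b :: t) (b :: a :: t ++ s).
Proof. apply/permP => P; rewrite /= !count_cat /=; lia. Qed.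

Lemma tail_not_tight N L m n l a i j v r Rs (Hm : (1 <= m)%N) (Hmn : (m < n)%N) (Hl1 : (1 <= l)%N)
  (Hl2 : (l <= L m - 1)%N) (hL : forall i, (1 <= i <= N)%N -> (1 <= L i)%N) (hnN : (n <= N)%N)
  (Ha : (m <= a)%N) (Hi : (1 <= i)%N) (Hj : (1 <= j <= L i)%N) :
  all is_rate Rs -> v \in tailS L a n ++ Rs -> List.In r (reactions_mj L i j) -> net v r != 0 ->
  Wt L m n l (rreac r) = wv L m n l v + 1 -> False.
Proof.
move=> HR; rewrite mem_cat => /orP[Hv|Hv] Hr Hn Ht.
  have [i0 [Hi0 Ev]] := mem_tail Hv.
  apply: (tightA (i0 := i0) Hm Hmn Hl1 Hl2 Hi Hj _ _ Ev Hr Hn Ht); first lia.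
  apply: hL; lia.
move/allP: HR => HR; have := HR v Hv; rewrite /is_rate => Hv5.
by rewrite (net_rate Hv5 Hr) eqxx in Hn.
Qed.

Lemma stepA N L m n l i (Hm : (1 <= m)%N) (Hmn : (m < n)%N) (Hl1 : (1 <= l)%N)
  (Hl2 : (l <= L m - 1)%N) (hL : forall i, (1 <= i <= N)%N -> (1 <= L i)%N) (hnN : (n <= N)%N)
  (Hi : (m < i <= n)%N) (g : seq var -> int) (Rs : seq var) :
  all is_rate Rs -> pinv g ->
  (forall y, Wt L m n l y <= Wt L m n l (spS i (L i) :: tailS L i n ++ Rs) -> g y = 0) ->
  Dop N L g (spS i (L i) :: tailS L i n ++ Rs) = g (spU i (L i) :: tailS L i n ++ kc i (L i) :: Rs).
Proof.
move=> HR Hg Hs.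
have Hr0 : List.In (Reaction (kc i (L i)) [:: spU i (L i)] [:: catalyst L i; spS i (L i)])
   (reactions_mj L i (L i)) by rewrite /reactions_mj /=; do 2 right; left.
have HLi : (1 <= L i)%N by apply: hL; lia.
have Hc : count_mem (spS i (L i)) (spS i (L i) :: tailS L i n ++ Rs) = 1%N.
  by rewrite /= eqxx count_cat count_tail ?count_rates //=; lia.
have Ht : forall v, v \in spS i (L i) :: tailS L i n ++ Rs -> forall i' j r, (1 <= i' <= N)%N -> (1 <= j <= L i')%N ->
     List.In r (reactions_mj L i' j) -> net v r != 0 ->
     Wt L m n l (rreac r) = wv L m n l v + 1 -> v = spS i (L i) /\ rrate r = kc i (L i).
  move=> v Hv i' j r Hi' Hj' Hr' Hn Ht.
  have Hi1 : (1 <= i')%N by lia.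
  move: Hv; rewrite inE => /orP[/eqP Ev|Hv].
    split => //; exact: (tightS (i0 := i) Hm Hmn Hl1 Hl2 Hi1 Hj' Hi Ev Hr' Hn Ht).
  exfalso; apply: (@tail_not_tight N L m n l i i' j v r Rs) => //; lia.
have Hi0 : (1 <= i <= N)%N by lia.
have Hj0 : (1 <= L i <= L i)%N by lia.
rewrite (@CS N L m n l g _ (spS i (L i)) _ i (L i) Hm Hmn Hl1 Hl2 Hi0 Hj0 Hr0 Hc Hs Ht).
have Hcat : (catalyst L i == spS i (L i)) = false.
  rewrite /catalyst; case: ifP => // _; apply/eqP; case; lia.
rewrite /net /= eqxx Hcat /= mul1r.
apply: Hg; apply/permP => P; rewrite /= !count_cat /=; lia.
Qed.

Lemma tailS_pred L i n : (1 <= i <= n)%N -> tailS L i.-1 n = spS i (L i - 1) :: tailS L i n.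
Proof.
move=> Hi; rewrite /tailS.
have -> : (n - i.-1 = (n - i).+1)%N by lia.
have -> : (i.-1).+1 = i by lia.
by [].
Qed.

Lemma stepB N L m n l i (Hm : (1 <= m)%N) (Hmn : (m < n)%N) (Hl1 : (1 <= l)%N)
  (Hl2 : (l <= L m - 1)%N) (hL : forall i, (1 <= i <= N)%N -> (1 <= L i)%N) (hnN : (n <= N)%N)
  (Hi : (m < i <= n)%N) (g : seq var -> int) (Rs : seq var) :
  all is_rate Rs -> pinv g ->
  (forall y, Wt L m n l y <= Wt L m n l (spU i (L i) :: tailS L i n ++ Rs) -> g y = 0) ->
  Dop N L g (spU i (L i) :: tailS L i n ++ Rs) =
  g (spS i.-1 (L i.-1) :: tailS L i.-1 n ++ ka i (L i) :: Rs).
Proof.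
move=> HR Hg Hs.
have Hr0 : List.In (Reaction (ka i (L i)) [:: catalyst L i; spS i (L i).-1] [:: spU i (L i)])
   (reactions_mj L i (L i)) by rewrite /reactions_mj /=; left.
have HLi : (1 <= L i)%N by apply: hL; lia.
have Hc : count_mem (spU i (L i)) (spU i (L i) :: tailS L i n ++ Rs) = 1%N.
  by rewrite /= eqxx count_cat count_tail ?count_rates //=; lia.
have Ht : forall v, v \in spU i (L i) :: tailS L i n ++ Rs -> forall i' j r, (1 <= i' <= N)%N -> (1 <= j <= L i')%N ->
     List.In r (reactions_mj L i' j) -> net v r != 0 ->
     Wt L m n l (rreac r) = wv L m n l v + 1 -> v = spU i (L i) /\ rrate r = ka i (L i).
  move=> v Hv i' j r Hi' Hj' Hr' Hn Ht.
  have Hi1 : (1 <= i')%N by lia.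
  move: Hv; rewrite inE => /orP[/eqP Ev|Hv].
    split => //; exact: (tightU (i0 := i) Hm Hmn Hl1 Hl2 Hi1 Hj' Hi Ev Hr' Hn Ht).
  exfalso; apply: (@tail_not_tight N L m n l i i' j v r Rs) => //; lia.
have Hi0 : (1 <= i <= N)%N by lia.
have Hj0 : (1 <= L i <= L i)%N by lia.
rewrite (@CS N L m n l g _ (spU i (L i)) _ i (L i) Hm Hmn Hl1 Hl2 Hi0 Hj0 Hr0 Hc Hs Ht).
have Hcat : catalyst L i = spS i.-1 (L i.-1).
  rewrite /catalyst; case: ifP => // /eqP Hi1; lia.
rewrite /net /= eqxx Hcat /= ?addn0 ?add0n ?subr0 ?mul1r (tailS_pred L (i := i) (n := n)); last by lia.
apply: Hg; rewrite -[(L i).-1]subn1; apply/permP => P; rewrite /= !count_cat /=; lia.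
Qed.

Lemma stepM N L m n l (Hm : (1 <= m)%N) (Hmn : (m < n)%N) (Hl1 : (1 <= l)%N)
  (Hl2 : (l <= L m - 1)%N) (hL : forall i, (1 <= i <= N)%N -> (1 <= L i)%N) (hnN : (n <= N)%N)
  (g : seq var -> int) (Rs : seq var) :
  all is_rate Rs -> pinv g ->
  (forall y, Wt L m n l y <= Wt L m n l (spS m (L m) :: tailS L m n ++ Rs) -> g y = 0) ->
  Dop N L g (spS m (L m) :: tailS L m n ++ Rs) =
  - g (spF m :: spS m (L m) :: tailS L m n ++ kat m (L m) :: Rs).
Proof.
move=> HR Hg Hs.
have Hr0 := in_at L m.
have HLi : (1 <= L m)%N by apply: hL; lia.
have Hc : count_mem (spS m (L m)) (spS m (L m) :: tailS L m n ++ Rs) = 1%N.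
  by rewrite /= eqxx count_cat count_tail ?count_rates //=; lia.
have Ht : forall v, v \in spS m (L m) :: tailS L m n ++ Rs -> forall i' j r, (1 <= i' <= N)%N -> (1 <= j <= L i')%N ->
     List.In r (reactions_mj L i' j) -> net v r != 0 ->
     Wt L m n l (rreac r) = wv L m n l v + 1 -> v = spS m (L m) /\ rrate r = kat m (L m).
  move=> v Hv i' j r Hi' Hj' Hr' Hn Ht.
  have Hi1 : (1 <= i')%N by lia.
  move: Hv; rewrite inE => /orP[/eqP Ev|Hv].
    split => //; exact: (tightSm Hm Hmn Hl1 Hl2 Hi1 Hj' Ev Hr' Hn Ht).
  exfalso; apply: (@tail_not_tight N L m n l m i' j v r Rs) => //; lia.
have Hi0 : (1 <= m <= N)%N by lia.
have Hj0 : (1 <= L m <= L m)%N by lia.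
rewrite (@CS N L m n l g _ (spS m (L m)) _ m (L m) Hm Hmn Hl1 Hl2 Hi0 Hj0 Hr0 Hc Hs Ht).
rewrite /net /= eqxx /= mulN1r; congr (- _).
apply: Hg; apply/permP => P; rewrite /= !count_cat /=; lia.
Qed.


Lemma wv_Si L m n l i : (m < i <= n)%N -> wv L m n l (spS i (L i)) = - (2 * (i%:Z - m%:Z)).
Proof. by move=> Hi; rewrite /wv /= eqxx andbT Hi. Qed.

Lemma wv_Ui L m n l i : (m < i <= n)%N -> wv L m n l (spU i (L i)) = 1 - 2 * (i%:Z - m%:Z).
Proof. by move=> Hi; rewrite /wv /= eqxx andbT Hi. Qed.

Lemma wv_Sl L m n l : (l <= L m - 1)%N -> (1 <= l)%N -> wv L m n l (spS m l) = 1.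
Proof.
move=> H1 H2; rewrite /wv /=.
rewrite (_ : ((m < m <= n) && (l == L m))%N = false); last by lia.
rewrite (_ : ((m < m <= n) && (l.+1 == L m))%N = false); last by lia.
by rewrite eqxx ltnn eqxx.
Qed.

Lemma wv_Vl L m n l : wv L m n l (spV m l) = 2.
Proof. by rewrite /wv /= eqxx ltnn eqxx. Qed.

Definition Kc (L : nat -> nat) (m i : nat) :=
  flatten [seq [:: kc i' (L i'); ka i' (L i')] | i' <- iota m.+1 (i - m)].

Lemma Kc_rates L m i : all is_rate (Kc L m i).
Proof.
by rewrite /Kc; elim: (iota _ _).

Qed.

Lemma KcS L m d : Kc L m (m + d.+1)%N = Kc L m (m + d)%N ++ [:: kc (m + d.+1)%N (L (m + d.+1)%N); ka (m + d.+1)%N (L (m + d.+1)%N)].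
Proof.
rewrite /Kc.
have -> : (m + d.+1 - m = d + 1)%N by lia.
have -> : (m + d - m = d)%N by lia.
rewrite iotaD map_cat flatten_cat /=.
by have -> : (m.+1 + d = m + d.+1)%N by lia.
Qed.

Lemma chain N L m n l (Hm : (1 <= m)%N) (Hmn : (m < n)%N) (Hl1 : (1 <= l)%N)
  (Hl2 : (l <= L m - 1)%N) (hL : forall i, (1 <= i <= N)%N -> (1 <= L i)%N) (hnN : (n <= N)%N)
  (T : seq var) (HWT : Wt L m n l T = 2) :
  forall d Rs, (m + d <= n)%N -> all is_rate Rs ->
  iter (2 * d + 2)%N (Dop N L) (fun y => (perm_eq y T)%:R : int) (spS (m + d)%N (L (m + d)%N) :: tailS L (m + d)%N n ++ Rs) =
  iter 2 (Dop N L) (fun y => (perm_eq y T)%:R : int) (spS m (L m) :: tailS L m n ++ Kc L m (m + d)%N ++ Rs).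
Proof.
set G := fun t => iter t (Dop N L) (fun y => (perm_eq y T)%:R : int).
have Gp : forall t, pinv (G t) by move=> t; apply: pinv_iter; apply: pinv_delta.
have Gs : forall t y, Wt L m n l y < 2 - t%:Z -> G t y = 0.
  move=> t y Hy; apply: (@support_iter N L m n l Hm Hmn Hl1 Hl2 _ 2) => //.
  move=> z Hz; apply: (@support_delta L m n l T); by rewrite HWT.
elim=> [|d IH] Rs Hd HR.
  by rewrite !addn0 /Kc subnn /=.
have Hi : (m < m + d.+1 <= n)%N by lia.
have HL1 : (1 <= L (m + d.+1)%N)%N by apply: hL; lia.
have -> : (2 * d.+1 + 2 = (2 * d + 2).+2)%N by lia.
rewrite -/(G _) /= -/(G _).
have Htail0 : Wt L m n l (tailS L (m + d.+1)%N n) = 0 by apply: (@Wt_tail N) => //; lia.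
have HR' : all is_rate (kc (m + d.+1)%N (L (m + d.+1)%N) :: Rs) by rewrite /= HR.
have S1 : forall y, Wt L m n l y <= Wt L m n l (spS (m + d.+1)%N (L (m + d.+1)%N) :: tailS L (m + d.+1)%N n ++ Rs) ->
   G (2 * d + 2).+1%N y = 0.
  move=> y Hy; apply: Gs; move: Hy; rewrite Wt_cons Wt_cat Htail0 (Wt_rates _ _ _ _ HR) wv_Si //; lia.
rewrite (@stepA N L m n l (m + d.+1)%N Hm Hmn Hl1 Hl2 hL hnN Hi _ Rs HR (pinvD _ _ (Gp _)) S1).
have S2 : forall y, Wt L m n l y <= Wt L m n l (spU (m + d.+1)%N (L (m + d.+1)%N) :: tailS L (m + d.+1)%N n ++
     kc (m + d.+1)%N (L (m + d.+1)%N) :: Rs) -> G (2 * d + 2)%N y = 0.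
  move=> y Hy; apply: Gs; move: Hy; rewrite Wt_cons Wt_cat Htail0 (Wt_rates _ _ _ _ HR') wv_Ui //; lia.
rewrite (@stepB N L m n l (m + d.+1)%N Hm Hmn Hl1 Hl2 hL hnN Hi _ _ HR' (Gp _) S2).
have -> : ((m + d.+1)%N.-1 = m + d)%N by lia.
rewrite /G IH; last by rewrite /= HR.
  2: lia.
apply: (Gp 2); rewrite KcS; apply/permP => P; rewrite /= !count_cat /=; lia.
Qed.
Lemma HXr_Ms L m l i j r : List.In r (reactions_mj L i j) -> net (spF m) r != 0 ->
  rrate r \notin [:: kat m l] -> spS m l \notin rreac r.
Proof.
rewrite /reactions_mj /= => Hr /net_mem; case: Hr => [<-|[<-|[<-|[<-|[<-|[<-|[]]]]]]];
rewrite /catalyst /=; try (case: ifP => _); rewrite !inE /= !xpair_eqE /=; lia.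
Qed.
Lemma HXr_Mv L m l i j r : List.In r (reactions_mj L i j) -> net (spF m) r != 0 ->
  rrate r \notin [:: kbt m l; kct m l] -> spV m l \notin rreac r.
Proof.
rewrite /reactions_mj /= => Hr /net_mem; case: Hr => [<-|[<-|[<-|[<-|[<-|[<-|[]]]]]]];
rewrite /catalyst /=; try (case: ifP => _); rewrite !inE /= !xpair_eqE /=; lia.
Qed.

Lemma sum_rate2 N L (F : reaction -> int) r1 r2 i1 j1 i2 j2 :
  (1 <= i1 <= N)%N -> (1 <= j1 <= L i1)%N -> List.In r1 (reactions_mj L i1 j1) ->
  (1 <= i2 <= N)%N -> (1 <= j2 <= L i2)%N -> List.In r2 (reactions_mj L i2 j2) ->
  rrate r1 != rrate r2 ->
  \sum_(r <- reactions N L | rrate r \in [:: rrate r1; rrate r2]) F r = F r1 + F r2.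
Proof.
move=> Hi1 Hj1 Hr1 Hi2 Hj2 Hr2 Hne.
rewrite (bigID (fun r => rrate r == rrate r1)) /=.
rewrite -(sum_rate1 F Hi1 Hj1 Hr1) -(sum_rate1 F Hi2 Hj2 Hr2).
congr (_ + _); apply: eq_bigl => r; rewrite !inE.
  by case: (rrate r == rrate r1); case: (rrate r == rrate r2).
case E1: (rrate r == rrate r1); last by rewrite andbT.
move/eqP: E1 => ->; by rewrite (negbTE Hne).
Qed.

Lemma perm_cancel (res T P C R : seq var) : perm_eq res (P ++ C) -> perm_eq T (P ++ R) ->
  perm_eq res T = perm_eq C R.
Proof. by move=> H1 H2; rewrite (permPl H1) (permPr H2) perm_cat2l. Qed.

Unset Implicit Arguments.

Theorem mainTheorem19 (N : nat) (L : nat -> nat)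
  (hN : (1 <= N)%N) (hL : forall i, (1 <= i <= N)%N -> (1 <= L i)%N)
  (m n l : nat) (hm : (1 <= m)%N) (hmn : (m < n)%N) (hnN : (n <= N)%N)
  (hl1 : (1 <= l)%N) (hl2 : (l <= L m - 1)%N) :
  let tail := [seq spS i (L i - 1) | i <- iota m.+1 (n - m)] in
  let Ms := [:: spS m l; spF m; spS m (L m)] ++ tail in
  let Mv := [:: spV m l; spS m (L m)] ++ tail in
  let Ktail := kat m (L m) :: flatten [seq [:: kc i (L i); ka i (L i)] | i <- iota m.+1 (n - m)] in
  let top := (2 * (n - m + 1))%N in
  (forall k, (1 <= k < top)%N ->
     conc_coef_zero (nderiv N L k (spS n (L n))) Ms /\
     conc_coef_zero (nderiv N L k (spS n (L n))) Mv) /\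
  (exists2 sgn : int, (sgn == 1) || (sgn == -1) &
     conc_coef_eq (nderiv N L top (spS n (L n))) Ms sgn [:: kat m l :: Ktail]) /\
  (exists2 sgn : int, (sgn == 1) || (sgn == -1) &
     conc_coef_eq (nderiv N L top (spS n (L n))) Mv sgn
       [:: kbt m l :: Ktail; kct m l :: Ktail]).
Proof.
move=> tail Ms Mv Ktail top.
have HLm : (1 <= L m)%N by apply: hL; lia.
have Htail0 : Wt L m n l tail = 0 by apply: (@Wt_tail N) => //.
have HWs : forall R, all is_rate R -> Wt L m n l (Ms ++ R) = 2.
  move=> R HR; rewrite /Ms !Wt_cat !Wt_cons Wt_nil Htail0 (Wt_rates _ _ _ _ HR) wv_Sl // wv_F wv_Sm // ?addr0.
have HWv : forall R, all is_rate R -> Wt L m n l (Mv ++ R) = 2.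
  move=> R HR; rewrite /Mv !Wt_cat !Wt_cons Wt_nil Htail0 (Wt_rates _ _ _ _ HR) wv_Vl wv_Sm // ?addr0.
have Hx0 : Wt L m n l [:: spS n (L n)] = - (2 * (n%:Z - m%:Z)).
  by rewrite Wt_cons Wt_nil wv_Si ?addr0 //; lia.
have Zero : forall M k R, all is_rate R -> Wt L m n l (M ++ R) = 2 -> (k < top)%N ->
    coef (nderiv N L k (spS n (L n))) (M ++ R) = 0.
  move=> M k R HR HW Hk; rewrite coef_nderiv.
  apply: (@support_iter N L m n l hm hmn hl1 hl2 _ 2).
    move=> y Hy; apply: (@support_delta L m n l (M ++ R)); by rewrite HW.
  rewrite Hx0; move: Hk; rewrite /top; lia.
split.
  move=> k /andP[_ Hk]; split => R HR; [apply: Zero => //; exact: HWs | apply: Zero => //; exact: HWv].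
have Etop : top = (2 * (n - m) + 2)%N by rewrite /top; lia.
have Chain : forall T, Wt L m n l T = 2 ->
   coef (nderiv N L top (spS n (L n))) T =
   - Dop N L (fun y => (perm_eq y T)%:R) (spF m :: spS m (L m) :: tailS L m n ++ kat m (L m) :: Kc L m n ++ [::]).
  move=> T HWT; rewrite coef_nderiv Etop.
  have E := @chain N L m n l hm hmn hl1 hl2 hL hnN T HWT (n - m) [::].
  have Emn : (m + (n - m))%N = n by lia.
  have Tn : tailS L n n = [::] by rewrite /tailS subnn.
  rewrite Emn Tn /= in E; rewrite E ?leqnn //.
  rewrite /=.
  have S0 : forall y, Wt L m n l y <= Wt L m n l (spS m (L m) :: tailS L m n ++ Kc L m n ++ [::]) ->
      Dop N L (fun y => (perm_eq y T)%:R : int) y = 0.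
    move=> y Hy.
    have Hsd : forall z, Wt L m n l z < 2 -> (fun y => (perm_eq y T)%:R : int) z = 0.
      by move=> z Hz; apply: (@support_delta L m n l T); rewrite HWT.
    apply: (@supportD N L m n l hm hmn hl1 hl2 _ 2 Hsd).
    move: Hy; rewrite Wt_cons Wt_cat (@Wt_tail N) // Wt_cat (Wt_rates _ _ _ _ (Kc_rates L m n)) Wt_nil wv_Sm //; lia.
  rewrite (@stepM N L m n l hm hmn hl1 hl2 hL hnN _ (Kc L m n ++ [::])) //.
    by rewrite cats0 Kc_rates.
  apply: pinvD; exact: pinv_delta.
have HRs : all is_rate (kat m (L m) :: Kc L m n ++ [::]) by rewrite /= cats0 Kc_rates.
have Hm1 : (1 <= m <= N)%N by lia.
have Hl : (1 <= l <= L m)%N by lia.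
have HSl : spS m (L m) != spS m l by apply/eqP; case; lia.
split.
  exists 1 => //.
  move=> R HR; rewrite Chain; last exact: HWs.
  rewrite (@FS N L m n l (Ms ++ R) (spS m l) [:: kat m l] _ hm hmn hl1 hl2 hL hnN HRs) //; first last.
  - move=> i j r _ _ Hr Hn HK; exact: HXr_Ms Hr Hn HK.
  - rewrite !inE negb_or; apply/andP; split; [by [] | by rewrite eq_sym].
  - rewrite /= count_cat count_tail ?count_rates //= !xpair_eqE /=; lia.
  - rewrite /Ms !count_cat /= count_tail ?count_rates //= !xpair_eqE /=; lia.
  - exact: HWs.
  have Hr0 : List.In (Reaction (kat m l) [:: spF m; spS m l] [:: spV m l]) (reactions_mj L m l).
    by rewrite /reactions_mj /=; do 3 right; left.
  rewrite (eq_bigl (fun r => rrate r == rrate (Reaction (kat m l) [:: spF m; spS m l] [:: spV m l])));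
    last by move=> r; rewrite inE.
  rewrite (sum_rate1 _ Hm1 Hl Hr0) /= big_cons big_nil addr0 mul1r.
  rewrite /net /= eqxx /=.
  have EK : Ktail = kat m (L m) :: Kc L m n by [].
  have Et : tail = tailS L m n by [].
  rewrite EK Et (@perm_cancel _ _ (spS m l :: spF m :: spS m (L m) :: tailS L m n) (kat m l :: kat m (L m) :: Kc L m n) R); first last.
  - by apply/permP => P; rewrite /= !count_cat /=; lia.
  - by apply/permP => P; rewrite /= ?cats0 !count_cat /=; lia.
  ring.
exists (-1) => //.
move=> R HR; rewrite Chain; last exact: HWv.
rewrite (@FS N L m n l (Mv ++ R) (spV m l) [:: kbt m l; kct m l] _ hm hmn hl1 hl2 hL hnN HRs) //; first last.
- move=> i j r _ _ Hr Hn HK; exact: HXr_Mv Hr Hn HK.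
- rewrite /= count_cat count_tail ?count_rates //= !xpair_eqE /=; lia.
- rewrite /Mv !count_cat /= count_tail ?count_rates //= !xpair_eqE /=; lia.
- exact: HWv.
have Hr1 : List.In (Reaction (kbt m l) [:: spV m l] [:: spF m; spS m l]) (reactions_mj L m l).
  by rewrite /reactions_mj /=; do 4 right; left.
have Hr2 : List.In (Reaction (kct m l) [:: spV m l] [:: spF m; spS m l.-1]) (reactions_mj L m l).
  by rewrite /reactions_mj /=; do 5 right; left.
rewrite (@sum_rate2 N L _ _ _ m l m l Hm1 Hl Hr1 Hm1 Hl Hr2) //.
rewrite /net /= eqxx /= big_cons big_cons big_nil.
have EK : Ktail = kat m (L m) :: Kc L m n by [].
have Et : tail = tailS L m n by [].
rewrite EK Et.
rewrite (@perm_cancel _ _ (spV m l :: spS m (L m) :: tailS L m n) (kbt m l :: kat m (L m) :: Kc L m n) R); first last.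
- by apply/permP => P; rewrite /= ?cats0 !count_cat /=; lia.
- by apply/permP => P; rewrite /= ?cats0 !count_cat /=; lia.
rewrite (@perm_cancel (spS m (L m) :: (tailS L m n ++ kat m (L m) :: Kc L m n ++ [::]) ++ [:: kct m l; spV m l]) _ (spV m l :: spS m (L m) :: tailS L m n) (kct m l :: kat m (L m) :: Kc L m n) R); first last.
- by apply/permP => P; rewrite /= ?cats0 !count_cat /=; lia.
- by apply/permP => P; rewrite /= ?cats0 !count_cat /=; lia.
ring.
Qed.
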